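(* Let $G$ be a signed digraph on $[n]$. If no vertex of $G$ has exactly one unsigned in-neighbor, or if every vertex of $G$ has at least one unsigned in-neighbor, then $G$ admits a nilpotent function $f:\{0,1,2\}^n\to\{0,1,2\}^n$ of class at most $2$.
   Context: A signed digraph is a digraph (loops allowed, no multiple arcs) in which each arc is labeled positive, negative, or null (unsigned). An unsigned in-neighbor of $i$ is a vertex $j$ such that $(j,i)$ is an unsigned (null) arc. For a finite interval of integers $A$, a function over $A$ is a map $f:A^n\to A^n$; $f^0=\mathrm{id}$, $f^k=f\circ f^{k-1}$. The interaction graph $G(f)$ is the signed digraph on $[n]$ with an arc $(j,i)$ iff $f_i(a)\neq f_i(b)$ for some $a,b\in A^n$ with $a_j<b_j$ and $a_\ell=b_\ell$ for $\ell\neq j$; the arc is positive if $f_i(a)\leq f_i(b)$ for all such pairs, negative if $f_i(a)\geq f_i(b)$ for all such pairs, and null otherwise. $G$ admits $f$ if $G(f)=G$. $f$ is nilpotent if $f^k$ is constant for some $k\geq 0$; the least such $k$ is its class. *)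

(* Defs.v *)
From mathcomp Require Import all_boot all_order.
Set Implicit Arguments. Unset Strict Implicit. Unset Printing Implicit Defensive.

Inductive sign := Pos | Neg | Null.

(* A signed digraph on [n] = 'I_n : G j i = None if there is no arc (j,i),
   Some s if the arc (j,i) exists with label s (loops allowed). *)
Definition signed_digraph (n : nat) := 'I_n -> 'I_n -> option sign.

Definition config (n : nat) := {ffun 'I_n -> 'I_3}.

Definition jpair n (j : 'I_n) (a b : config n) : bool :=
  (a j < b j) && [forall l, (l != j) ==> (a l == b l)].

Definition interaction n (f : config n -> config n) : signed_digraph n :=
  fun j i =>
    if [forall a, forall b, jpair j a b ==> (f a i == f b i)] then None
    else if [forall a, forall b, jpair j a b ==> (f a i <= f b i)] then Some Pos
    else if [forall a, forall b, jpair j a b ==> (f b i <= f a i)] then Some Neg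
    else Some Null.

Definition admits n (G : signed_digraph n) (f : config n -> config n) : Prop :=
  forall j i, interaction f j i = G j i.

Definition is_null (s : option sign) : bool :=
  if s is Some Null then true else false.

Definition n_unsigned_in n (G : signed_digraph n) (i : 'I_n) : nat :=
  #|[set j | is_null (G j i)]|.

Definition nilpotent_le n (f : config n -> config n) (k : nat) : Prop :=
  exists m, m <= k /\ exists c : config n, forall x, iter m f x = c.

(* Main.v *)
Require Import Defs.
From mathcomp Require Import all_boot all_order.
Set Implicit Arguments. Unset Strict Implicit. Unset Printing Implicit Defensive.

Definition lit (c2 : bool) (s : option sign) (v : 'I_3) : bool :=
  match s with
  | Some Pos => v == 2 :> nat
  | Some Neg => v != 2 :> nat
  | Some Null => if c2 then v == 1 :> nat else true
  | None => true
  end.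

Definition Fc (c2 : bool) n (G : signed_digraph n) (i : 'I_n) (x : config n) : bool :=
  [forall k, lit c2 (G k i) (x k)] &&
  (c2 || ~~ odd #|[set k | is_null (G k i) && (x k == 2 :> nat)]|).

Definition kk (c2 : bool) := if c2 then 2 else 1.

Definition fc (c2 : bool) n (G : signed_digraph n) (x : config n) : config n :=
  [ffun i => inord (kk c2 * Fc c2 G i x)].

Lemma fc_val c2 n (G : signed_digraph n) x i :
  (fc c2 G x i : nat) = kk c2 * Fc c2 G i x.
Proof. by rewrite ffunE inordK //; case: c2; case: (Fc _ _ _ _). Qed.

Lemma interaction_F c2 n (G : signed_digraph n) j i :
  interaction (fc c2 G) j i =
  let F := Fc c2 G i in
  if [forall a, forall b, jpair j a b ==> (F a == F b)] then None
  else if [forall a, forall b, jpair j a b ==> (F a ==> F b)] then Some Pos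
  else if [forall a, forall b, jpair j a b ==> (F b ==> F a)] then Some Neg
  else Some Null.
Proof.
have E1 : forall a b, (fc c2 G a i == fc c2 G b i) = (Fc c2 G i a == Fc c2 G i b).
  by move=> a b; rewrite -val_eqE /= !fc_val; case: c2; case: (Fc _ _ _ a); case: (Fc _ _ _ b).
have E2 : forall a b, (fc c2 G a i <= fc c2 G b i) = (Fc c2 G i a ==> Fc c2 G i b).
  by clear E1; move=> a b; rewrite !fc_val; case: c2; case: (Fc _ _ _ a); case: (Fc _ _ _ b).
rewrite /interaction /=.
have -> : [forall a, forall b, jpair j a b ==> (fc c2 G a i == fc c2 G b i)] =
   [forall a, forall b, jpair j a b ==> (Fc c2 G i a == Fc c2 G i b)].
  by apply: eq_forallb => a; apply: eq_forallb => b; rewrite E1.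
have -> : [forall a, forall b, jpair j a b ==> (fc c2 G a i <= fc c2 G b i)] =
   [forall a, forall b, jpair j a b ==> (Fc c2 G i a ==> Fc c2 G i b)].
  by apply: eq_forallb => a; apply: eq_forallb => b; rewrite E2.
have -> : [forall a, forall b, jpair j a b ==> (fc c2 G b i <= fc c2 G a i)] =
   [forall a, forall b, jpair j a b ==> (Fc c2 G i b ==> Fc c2 G i a)].
  by apply: eq_forallb => a; apply: eq_forallb => b; rewrite E2.
done.
Qed.
Definition signF n (j : 'I_n) (F : config n -> bool) : option sign :=
  if [forall a, forall b, jpair j a b ==> (F a == F b)] then None
  else if [forall a, forall b, jpair j a b ==> (F a ==> F b)] then Some Pos
  else if [forall a, forall b, jpair j a b ==> (F b ==> F a)] then Some Neg
  else Some Null.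

Lemma signF_none n (j : 'I_n) F :
  (forall a b, jpair j a b -> F a = F b) -> signF j F = None.
Proof.
move=> H; rewrite /signF.
have -> // : [forall a, forall b, jpair j a b ==> (F a == F b)].
by apply/forallP => a; apply/forallP => b; apply/implyP => /H ->.
Qed.

Lemma not_all_eq n (j : 'I_n) (F : config n -> bool) a b :
  jpair j a b -> F a != F b -> [forall a, forall b, jpair j a b ==> (F a == F b)] = false.
Proof.
move=> Hj Hn; apply/negbTE/forallPn; exists a; apply/forallPn; exists b.
by rewrite Hj.
Qed.

Lemma signF_pos n (j : 'I_n) F a b :
  (forall a b, jpair j a b -> F a ==> F b) -> jpair j a b -> ~~ F a -> F b ->
  signF j F = Some Pos.
Proof.
move=> H Hj Ha Hb; rewrite /signF (@not_all_eq _ _ _ a b Hj); last first.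
  by move: Ha Hb; case: (F a); case: (F b).
have -> // : [forall a, forall b, jpair j a b ==> (F a ==> F b)].
by apply/forallP => a'; apply/forallP => b'; apply/implyP => /H.
Qed.

Lemma signF_neg n (j : 'I_n) F a b :
  (forall a b, jpair j a b -> F b ==> F a) -> jpair j a b -> F a -> ~~ F b ->
  signF j F = Some Neg.
Proof.
move=> H Hj Ha Hb; rewrite /signF (@not_all_eq _ _ _ a b Hj); last first.
  by move: Ha Hb; case: (F a); case: (F b).
have -> : [forall a, forall b, jpair j a b ==> (F a ==> F b)] = false.
  apply/negbTE/forallPn; exists a; apply/forallPn; exists b.
  by rewrite Hj; move: Ha Hb; case: (F a); case: (F b).
have -> // : [forall a, forall b, jpair j a b ==> (F b ==> F a)].
by apply/forallP => a'; apply/forallP => b'; apply/implyP => /H.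
Qed.

Lemma signF_null n (j : 'I_n) F a b a' b' :
  jpair j a b -> ~~ F a -> F b -> jpair j a' b' -> F a' -> ~~ F b' ->
  signF j F = Some Null.
Proof.
move=> Hj Ha Hb Hj' Ha' Hb'; rewrite /signF (@not_all_eq _ _ _ a b Hj); last first.
  by move: Ha Hb; case: (F a); case: (F b).
have -> : [forall a, forall b, jpair j a b ==> (F a ==> F b)] = false.
  apply/negbTE/forallPn; exists a'; apply/forallPn; exists b'.
  by rewrite Hj'; move: Ha' Hb'; case: (F a'); case: (F b').
have -> // : [forall a, forall b, jpair j a b ==> (F b ==> F a)] = false.
apply/negbTE/forallPn; exists a; apply/forallPn; exists b.
by rewrite Hj; move: Ha Hb; case: (F a); case: (F b).
Qed.

Lemma jpair_off n (j : 'I_n) a b k : jpair j a b -> k != j -> a k = b k.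
Proof. by case/andP => _ /forallP /(_ k) /implyP H /H /eqP. Qed.

Lemma jpair_lt n (j : 'I_n) a b : jpair j a b -> a j < b j.
Proof. by case/andP. Qed.

Lemma jpair_a2 n (j : 'I_n) a b : jpair j a b -> (a j == 2 :> nat) = false.
Proof.
move/jpair_lt => H; apply/negbTE; move: H; case: (b j) => /= m Hm.
by move: Hm; case: (nat_of_ord (a j)) => [|[|[|p]]] //; case: m => [|[|[|]]].
Qed.
Lemma Fc_imp c2 n (G : signed_digraph n) i (a b : config n) :
  (forall k, lit c2 (G k i) (a k) ==> lit c2 (G k i) (b k)) ->
  (forall k, is_null (G k i) -> (a k == 2 :> nat) = (b k == 2 :> nat)) ->
  Fc c2 G i a ==> Fc c2 G i b.
Proof.
move=> Hl Hn; rewrite /Fc.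
have -> : [set k | is_null (G k i) && (a k == 2 :> nat)] =
          [set k | is_null (G k i) && (b k == 2 :> nat)].
  by apply/setP => k; rewrite !inE; case E: (is_null _) => //; rewrite Hn.
have : [forall k, lit c2 (G k i) (a k)] ==> [forall k, lit c2 (G k i) (b k)].
  apply/implyP => /forallP H; apply/forallP => k; exact: (implyP (Hl k) (H k)).
by move=> H; apply/implyP => /andP[H1 H2]; rewrite (implyP H H1) H2.
Qed.

Lemma Fc_eq c2 n (G : signed_digraph n) i (a b : config n) :
  (forall k, lit c2 (G k i) (a k) = lit c2 (G k i) (b k)) ->
  (forall k, is_null (G k i) -> (a k == 2 :> nat) = (b k == 2 :> nat)) ->
  Fc c2 G i a = Fc c2 G i b.
Proof.
move=> Hl Hn; apply/idP/idP; apply/implyP; apply: Fc_imp => k.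
- by rewrite Hl implybb.
- by move/Hn.
- by rewrite Hl implybb.
- by move/Hn ->.
Qed.

Lemma signF_jpair_cases c2 n (G : signed_digraph n) (j i : 'I_n) (a b : config n) :
  jpair j a b ->
  [/\ G j i = None -> Fc c2 G i a = Fc c2 G i b,
      G j i = Some Pos -> Fc c2 G i a ==> Fc c2 G i b &
      G j i = Some Neg -> Fc c2 G i b ==> Fc c2 G i a].
Proof.
move=> Hj.
have Hoff : forall k, k != j -> a k = b k by move=> k; exact: jpair_off.
have Ha2 := jpair_a2 Hj.
split=> HG.
- apply: Fc_eq => k; case: (eqVneq k j) => [->|/Hoff ->] //; rewrite HG //.
- apply: Fc_imp => k; case: (eqVneq k j) => [->|/Hoff ->]; rewrite ?implybb // HG /= ?Ha2 //.
- apply: Fc_imp => k; case: (eqVneq k j) => [->|/Hoff ->]; rewrite ?implybb // HG /= ?Ha2 //.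
  by rewrite implybT.
Qed.
Lemma interaction_sig c2 n (G : signed_digraph n) j i :
  interaction (fc c2 G) j i = signF j (Fc c2 G i).
Proof. exact: interaction_F. Qed.

Definition o0 : 'I_3 := @Ordinal 3 0 isT.
Definition o1 : 'I_3 := @Ordinal 3 1 isT.
Definition o2 : 'I_3 := @Ordinal 3 2 isT.

Definition base (c2 : bool) (s : option sign) : 'I_3 :=
  match s with Some Pos => o2 | Some Null => if c2 then o1 else o0 | _ => o0 end.

Lemma lit_base c2 s : lit c2 s (base c2 s).
Proof. by case: s => [[]|] //; case: c2. Qed.

Definition cx c2 n (G : signed_digraph n) i (j : 'I_n) (v : 'I_3) (S : {set 'I_n}) : config n :=
  [ffun k => if k == j then v else if k \in S then o2 else base c2 (G k i)].

Lemma jpair_cx c2 n (G : signed_digraph n) i j (v1 v2 : 'I_3) (S : {set 'I_n}) :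
  v1 < v2 -> jpair j (cx c2 G i j v1 S) (cx c2 G i j v2 S).
Proof.
move=> H; apply/andP; split; first by rewrite !ffunE eqxx.
by apply/forallP => l; apply/implyP => Hl; rewrite !ffunE (negbTE Hl).
Qed.

Lemma forall_cx c2 n (G : signed_digraph n) i (j : 'I_n) (v : 'I_3) (S : {set 'I_n}) :
  (forall k, k \in S -> k != j -> lit c2 (G k i) o2) ->
  [forall k, lit c2 (G k i) (cx c2 G i j v S k)] = lit c2 (G j i) v.
Proof.
move=> HS; apply/forallP/idP => [/(_ j)|Hv k]; first by rewrite ffunE eqxx.
rewrite ffunE; case: (eqVneq k j) => [->//|Hk].
by case: ifP => [/HS /(_ Hk)|_] //; exact: lit_base.
Qed.

Lemma mem_cx n (G : signed_digraph n) i (j : 'I_n) (v : 'I_3) (S : {set 'I_n}) k :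
  (k \in [set k | is_null (G k i) && (cx false G i j v S k == 2 :> nat)]) =
  if k == j then is_null (G j i) && (v == 2 :> nat) else (k \in S) && is_null (G k i).
Proof.
rewrite inE ffunE; case: (eqVneq k j) => [->//|Hk].
by case: (k \in S); case: (G k i) => [[]|] //=; rewrite andbF.
Qed.
Lemma Fc_cx_true n (G : signed_digraph n) i (j : 'I_n) v :
  Fc true G i (cx true G i j v set0) = lit true (G j i) v.
Proof. by rewrite /Fc forall_cx ?andbT // => k; rewrite inE. Qed.

Lemma Fc_cx_false n (G : signed_digraph n) i (j : 'I_n) v (S : {set 'I_n}) :
  (forall k, k \in S -> is_null (G k i)) ->
  Fc false G i (cx false G i j v S) =
  lit false (G j i) v &&
  ~~ odd #|[set k | is_null (G k i) && (cx false G i j v S k == 2 :> nat)]|.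
Proof.
move=> HS; rewrite /Fc forall_cx // => k /HS.
by case: (G k i) => [[]|].
Qed.

Lemma admits_fc c2 n (G : signed_digraph n) :
  (~~ c2 -> forall i, n_unsigned_in G i <> 1) -> admits G (fc c2 G).
Proof.
move=> Hc j i; rewrite interaction_sig.
have lt01 : o0 < o1 by []. have lt12 : o1 < o2 by []. have lt02 : o0 < o2 by [].
have set0E : forall v, ~~ is_null (G j i) ->
   [set k | is_null (G k i) && (cx false G i j v set0 k == 2 :> nat)] = set0.
  move=> v Hn; apply/setP => k; rewrite mem_cx !inE.
  by case: ifP => _; rewrite ?(negbTE Hn).
have noS : forall k, k \in (set0 : {set 'I_n}) -> is_null (G k i) by move=> k; rewrite inE.
case HG: (G j i) => [[]|].
- apply: (@signF_pos _ _ _ (cx c2 G i j o0 set0) (cx c2 G i j o2 set0)).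
  + by move=> a b /(signF_jpair_cases c2 G i) [_ H _]; exact: H.
  + exact: jpair_cx.
  + by case: c2 {Hc}; rewrite ?Fc_cx_true ?Fc_cx_false // HG.
  + case: c2 {Hc}; rewrite ?Fc_cx_true ?Fc_cx_false // HG //=.
    by rewrite set0E ?HG // cards0.
- apply: (@signF_neg _ _ _ (cx c2 G i j o0 set0) (cx c2 G i j o2 set0)).
  + by move=> a b /(signF_jpair_cases c2 G i) [_ _ H]; exact: H.
  + exact: jpair_cx.
  + case: c2 {Hc}; rewrite ?Fc_cx_true ?Fc_cx_false // HG //=.
    by rewrite set0E ?HG // cards0.
  + by case: c2 {Hc}; rewrite ?Fc_cx_true ?Fc_cx_false // HG.
- case: c2 Hc => Hc.
  + apply: (@signF_null _ _ _ (cx true G i j o0 set0) (cx true G i j o1 set0)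
                              (cx true G i j o1 set0) (cx true G i j o2 set0));
      rewrite ?Fc_cx_true ?HG //; exact: jpair_cx.
  + have Hj : j \in [set k | is_null (G k i)] by rewrite inE HG.
    have : 0 < #|[set k | is_null (G k i)] :\ j|.
      move: (Hc isT i); rewrite /n_unsigned_in (cardsD1 j) Hj.
      by case: #|_ :\ j|.
    case/card_gt0P => u; rewrite !inE => /andP [Huj Hu].
    have HS : forall k, k \in [set u] -> is_null (G k i) by move=> k; rewrite inE => /eqP ->.
    apply: (@signF_null _ _ _ (cx false G i j o0 [set u]) (cx false G i j o2 [set u])
                              (cx false G i j o0 set0) (cx false G i j o2 set0));
      rewrite ?Fc_cx_false ?HG //=; try exact: jpair_cx.
    * have -> : [set k | is_null (G k i) && (cx false G i j o0 [set u] k == 2 :> nat)] = [set u].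
        apply/setP => k; rewrite mem_cx !inE; case: (eqVneq k j) => [->|]; first by rewrite /= andbF; apply/esym/negbTE; rewrite eq_sym.
        by case: (eqVneq k u) => [->|].
      by rewrite cards1.
    * have -> : [set k | is_null (G k i) && (cx false G i j o2 [set u] k == 2 :> nat)] = [set j; u].
        apply/setP => k; rewrite mem_cx !inE; case: (eqVneq k j) => [->|] /=; first by rewrite HG.
        by case: (eqVneq k u) => [->|].
      by rewrite cards2 eq_sym Huj.
    * have -> : [set k | is_null (G k i) && (cx false G i j o0 set0 k == 2 :> nat)] = set0.
        by apply/setP => k; rewrite mem_cx !inE; case: (_ == _) => /=; rewrite ?andbF.
      by rewrite cards0.
    * have -> : [set k | is_null (G k i) && (cx false G i j o2 set0 k == 2 :> nat)] = [set j].
        by apply/setP => k; rewrite mem_cx !inE; case: (k == j) => /=; rewrite ?HG.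
      by rewrite cards1.
- apply: signF_none => a b /(signF_jpair_cases c2 G i) [H _ _]; exact: H.
Qed.
Lemma fc_const_nil c2 n (G : signed_digraph n) :
  (forall x y, fc c2 G (fc c2 G x) = fc c2 G (fc c2 G y)) -> nilpotent_le (fc c2 G) 2.
Proof.
move=> H; exists 2; split => //; exists (fc c2 G (fc c2 G [ffun => o0])) => x /=.
exact: H.
Qed.

Lemma nil_false n (G : signed_digraph n) : nilpotent_le (fc false G) 2.
Proof.
apply: fc_const_nil => x y; apply/ffunP => i; rewrite !ffunE; congr inord; congr (_ * nat_of_bool _).
have H2 : forall z k, (fc false G z k == 2 :> nat) = false.
  by move=> z k; rewrite fc_val /kk; case: (Fc _ _ _ _).
apply: Fc_eq => k; rewrite ?H2 //.
case: (G k i) => [[]|] //=; rewrite ?H2 //.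
Qed.

Lemma nil_true n (G : signed_digraph n) :
  (forall i, 0 < n_unsigned_in G i) -> nilpotent_le (fc true G) 2.
Proof.
move=> Hu; apply: fc_const_nil => x y; apply/ffunP => i; rewrite !ffunE.
have H0 : forall z, Fc true G i (fc true G z) = false.
  move=> z; case/card_gt0P: (Hu i) => u; rewrite inE => Hn.
  apply/negbTE; rewrite /Fc negb_and; apply/orP; left; apply/forallPn; exists u.
  move: Hn; case: (G u i) => [[]|] //= _.
  by rewrite fc_val /kk; case: (Fc _ _ _ _).
by rewrite !H0.
Qed.

Theorem proposition6 (n : nat) (G : signed_digraph n) :
  ((forall i : 'I_n, n_unsigned_in G i <> 1) \/
   (forall i : 'I_n, 0 < n_unsigned_in G i)) ->
  exists f : config n -> config n, admits G f /\ nilpotent_le f 2.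
Proof.
case=> H.
- exists (fc false G); split; [apply: admits_fc => _; exact: H | exact: nil_false].
- exists (fc true G); split; [by apply: admits_fc | exact: nil_true].
Qed.
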